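(* In a sufficiently small neighborhood of $s_0\in\mathbb{R}$, the signed Korányi chord length function $\operatorname{ch}_{\mathcal{H}}$ is a smooth function satisfying $\operatorname{ch}_{\mathcal{H}}'(s)>0$. Moreover, the size of such a neighborhood in $\mathbb{R}$ can be taken uniformly for all $p\in K$.
   Context: $\mathcal{H}=\mathbb{C}\times\mathbb{R}$ is the 3-dimensional Heisenberg group with coordinates $(x,y,u)$, group law $(x,y,u)\cdot(x',y',u')=(x+x',y+y',u+u'+\tfrac12(xy'-x'y))$, horizontal distribution spanned by $X=\partial_x-\tfrac12 y\,\partial_u$, $Y=\partial_y+\tfrac12 x\,\partial_u$ (orthonormal, norm $|\cdot|$). The Korányi distance is $d_{\mathcal{H}}(p,q)=\|p^{-1}q\|_{\mathcal{H}}$ with $\|(x,y,u)\|_{\mathcal{H}}=\sqrt[4]{(x^2+y^2)^2+16u^2}$. Let $K$ be a smooth Legendrian knot (closed, embedded, with horizontal velocity), parametrized by arc length $\gamma$, extended to a periodic map $\gamma\colon\mathbb{R}\to\mathcal{H}$ with period the length of $K$. Fix $p=\gamma(s_0)\in K$. The signed chord length function $\operatorname{ch}_{\mathcal{H}}\colon\mathbb{R}\to\mathbb{R}$ is defined by $\operatorname{ch}_{\mathcal{H}}(s)=d_{\mathcal{H}}(p,\gamma(s))$ for $s>s_0$, $0$ for $s=s_0$, and $-d_{\mathcal{H}}(p,\gamma(s))$ for $s<s_0$. *)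

(* Defs.v *)
From Stdlib Require Import Reals Lra.
From Coquelicot Require Import Coquelicot.
Open Scope R_scope.

(* Heisenberg group H = R^3 with coordinates (x,y,u). *)
Definition hpoint : Type := (R * R * R)%type.

Definition hmul (p q : hpoint) : hpoint :=
  let '(x, y, u) := p in let '(x', y', u') := q in
  (x + x', y + y', u + u' + / 2 * (x * y' - x' * y)).

Definition hinv (p : hpoint) : hpoint :=
  let '(x, y, u) := p in (- x, - y, - u).

Definition koranyi_norm (p : hpoint) : R :=
  let '(x, y, u) := p in sqrt (sqrt ((x ^ 2 + y ^ 2) ^ 2 + 16 * u ^ 2)).

Definition koranyi_dist (p q : hpoint) : R := koranyi_norm (hmul (hinv p) q).

Definition curve (gx gy gu : R -> R) (s : R) : hpoint := (gx s, gy s, gu s).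

Definition smooth_fun (f : R -> R) : Prop := forall n x, ex_derive_n f n x.

(* Legendrian knot of length L parametrized by arc length, extended
   L-periodically to R:
   - smooth coordinates;
   - horizontal velocity: u' = 1/2 (x y' - y x')
     (i.e. gamma' = x' X + y' Y);
   - arc length: |gamma'| = sqrt(x'^2 + y'^2) = 1;
   - L-periodic, and injective on [0,L) (closed embedded curve;
     hence L is the length of K). *)
Definition legendrian_knot_al (gx gy gu : R -> R) (L : R) : Prop :=
  0 < L /\
  smooth_fun gx /\ smooth_fun gy /\ smooth_fun gu /\
  (forall s, Derive gu s = / 2 * (gx s * Derive gy s - gy s * Derive gx s)) /\
  (forall s, (Derive gx s) ^ 2 + (Derive gy s) ^ 2 = 1) /\
  (forall s, curve gx gy gu (s + L) = curve gx gy gu s) /\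
  (forall s t, 0 <= s < L -> 0 <= t < L ->
     curve gx gy gu s = curve gx gy gu t -> s = t).

Definition chord_H (gx gy gu : R -> R) (s0 s : R) : R :=
  if Rlt_dec s0 s then koranyi_dist (curve gx gy gu s0) (curve gx gy gu s)
  else if Rlt_dec s s0 then - koranyi_dist (curve gx gy gu s0) (curve gx gy gu s)
  else 0.

(* Main.v *)
Require Import Defs.
From Stdlib Require Import Reals Lra Lia ZArith FunctionalExtensionality.
From Coquelicot Require Import Coquelicot.
Open Scope R_scope.


Lemma Derive_n_S' (f : R -> R) n x : Derive_n f (S n) x = Derive_n (Derive f) n x.
Proof.
  revert x; induction n; intros x; [reflexivity|].
  simpl. apply Derive_ext. intros t. apply IHn.
Qed.

Lemma exdn_up f n x : ex_derive f x -> ex_derive_n (Derive f) n x -> ex_derive_n f (S n) x.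
Proof.
  intros H1 H2. destruct n; [exact H1|].
  simpl. simpl in H2. eapply ex_derive_ext; [|exact H2].
  intros t. symmetry. apply (Derive_n_S' f n t).
Qed.

Lemma exdn_down f n x : ex_derive_n f (S n) x -> ex_derive_n (Derive f) n x.
Proof.
  intros H. destruct n; [exact I|].
  simpl. simpl in H. eapply ex_derive_ext; [|exact H].
  intros t. apply (Derive_n_S' f n t).
Qed.

Definition Cn (a b : R) (n : nat) (f : R -> R) :=
  forall k x, (k <= n)%nat -> a < x < b -> ex_derive_n f k x.

Lemma loc_int a b x : a < x < b -> locally x (fun y => a < y < b).
Proof.
  intros Hx.
  assert (He : 0 < Rmin (x - a) (b - x)) by (apply Rmin_pos; lra).
  exists (mkposreal _ He). intros y Hy.
  change (Rabs (y - x) < Rmin (x - a) (b - x)) in Hy.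
  apply Rabs_def2 in Hy. destruct Hy as [H1 H2].
  pose proof (Rmin_l (x-a) (b-x)). pose proof (Rmin_r (x-a) (b-x)). lra.
Qed.

Lemma Cn_loc a b n f x : Cn a b n f -> a < x < b ->
  locally x (fun y => forall k, (k <= n)%nat -> ex_derive_n f k y).
Proof.
  intros H Hx. eapply filter_imp; [|apply (loc_int a b x Hx)].
  intros y Hy k Hk. apply H; auto.
Qed.

Lemma Cn_mono a b n m f : (m <= n)%nat -> Cn a b n f -> Cn a b m f.
Proof. intros Hm H k x Hk Hx. apply H; auto; lia. Qed.

Lemma Cn_Derive a b n f : Cn a b (S n) f -> Cn a b n (Derive f).
Proof. intros H k x Hk Hx. apply exdn_down. apply H; auto; lia. Qed.

Lemma Cn_exd a b n f x : Cn a b (S n) f -> a < x < b -> ex_derive f x.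
Proof. intros H Hx. apply (H 1%nat x); auto; lia. Qed.

Ltac exd H := eapply (Cn_exd _ _ _ _ _ H); assumption.
Ltac mono H := match type of H with Cn ?a ?b (S ?n) ?f => apply (Cn_mono a b (S n) n f); [lia|exact H] end.

Lemma Cn_plus a b n f g : Cn a b n f -> Cn a b n g -> Cn a b n (fun x => f x + g x).
Proof.
  intros Hf Hg k x Hk Hx. apply ex_derive_n_plus.
  - eapply filter_imp; [|apply (Cn_loc a b n f x Hf Hx)]. intros y Hy j Hj. apply Hy; lia.
  - eapply filter_imp; [|apply (Cn_loc a b n g x Hg Hx)]. intros y Hy j Hj. apply Hy; lia.
Qed.

Lemma Cn_opp a b n f : Cn a b n f -> Cn a b n (fun x => - f x).
Proof. intros Hf k x Hk Hx. apply ex_derive_n_opp. apply Hf; auto. Qed.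

Lemma Cn_ext a b n f g : (forall x, f x = g x) -> Cn a b n f -> Cn a b n g.
Proof. intros E Hf k x Hk Hx. eapply ex_derive_n_ext; [exact E|]. apply Hf; auto. Qed.

Lemma Cn_ext_loc a b n f g : (forall x, a < x < b -> f x = g x) -> Cn a b n f -> Cn a b n g.
Proof.
  intros E Hf k x Hk Hx. eapply ex_derive_n_ext_loc; [|apply Hf; [exact Hk|exact Hx]].
  eapply filter_imp; [|apply (loc_int a b x Hx)]. intros y Hy. apply E; auto.
Qed.

Lemma Cn_minus a b n f g : Cn a b n f -> Cn a b n g -> Cn a b n (fun x => f x - g x).
Proof. intros Hf Hg. apply (Cn_plus a b n f (fun x => - g x)); [exact Hf| apply Cn_opp; exact Hg]. Qed.

Lemma Cn_mult a b n : forall f g, Cn a b n f -> Cn a b n g -> Cn a b n (fun x => f x * g x).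
Proof.
  induction n as [|n IH]; intros f g Hf Hg k x Hk Hx.
  - assert (k = 0%nat) by lia. subst. exact I.
  - destruct (Nat.le_gt_cases k n) as [Hkn|Hkn].
    + assert (Hf' := Cn_mono a b (S n) n f ltac:(lia) Hf). 
      exact (IH f g Hf' (Cn_mono a b (S n) n g ltac:(lia) Hg) k x Hkn Hx).
    + assert (k = S n) by lia. subst k.
      apply exdn_up.
      * apply ex_derive_mult; [exd Hf|exd Hg].
      * assert (HC : Cn a b n (fun y => Derive f y * g y + f y * Derive g y)).
        { apply Cn_plus; apply IH. apply Cn_Derive; exact Hf. mono Hg. mono Hf. apply Cn_Derive; exact Hg. }
        
        refine (Cn_ext_loc a b n _ (Derive (fun y => f y * g y)) _ HC n x (Nat.le_refl n) Hx).
        intros y Hy. rewrite Derive_mult; [reflexivity|exd Hf|exd Hg].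
Qed.

Lemma Cn_const a b n c : Cn a b n (fun _ => c).
Proof. intros k x Hk Hx. apply ex_derive_n_const. Qed.

Lemma Cn_inv a b n : forall f, Cn a b n f -> (forall x, a < x < b -> f x <> 0) ->
  Cn a b n (fun x => / f x).
Proof.
  induction n as [|n IH]; intros f Hf Hnz k x Hk Hx.
  - assert (k = 0%nat) by lia. subst. exact I.
  - destruct (Nat.le_gt_cases k n) as [Hkn|Hkn].
    + assert (Hf' := Cn_mono a b (S n) n f ltac:(lia) Hf). exact (IH f Hf' Hnz k x Hkn Hx).
    + assert (k = S n) by lia. subst k.
      apply exdn_up.
      * apply ex_derive_inv; [exd Hf| apply Hnz; auto].
      * assert (HC : Cn a b n (fun y => - Derive f y * (/ f y * / f y))).
        { apply Cn_mult. apply Cn_opp, Cn_Derive; auto.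
          apply Cn_mult; apply IH; auto; mono Hf. }
        refine (Cn_ext_loc a b n _ (Derive (fun y => / f y)) _ HC n x (Nat.le_refl n) Hx).
        intros y Hy. rewrite Derive_inv; [|exd Hf| apply Hnz; auto].
        specialize (Hnz y Hy). field. auto.
Qed.

Lemma Cn_sqrt a b n : forall f, Cn a b n f -> (forall x, a < x < b -> 0 < f x) ->
  Cn a b n (fun x => sqrt (f x)).
Proof.
  induction n as [|n IH]; intros f Hf Hp k x Hk Hx.
  - assert (k = 0%nat) by lia. subst. exact I.
  - destruct (Nat.le_gt_cases k n) as [Hkn|Hkn].
    + assert (Hf' := Cn_mono a b (S n) n f ltac:(lia) Hf). exact (IH f Hf' Hp k x Hkn Hx).
    + assert (k = S n) by lia. subst k.
      apply exdn_up.
      * eexists. apply is_derive_sqrt; [apply Derive_correct; exd Hf| apply Hp; auto].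
      * assert (HC : Cn a b n (fun y => Derive f y * / (2 * sqrt (f y)))).
        { apply Cn_mult. apply Cn_Derive; auto.
          apply Cn_inv.
          - apply Cn_mult. apply Cn_const. apply IH; auto; mono Hf.
          - intros y Hy. specialize (Hp y Hy). pose proof (sqrt_lt_R0 _ Hp). lra. }
        refine (Cn_ext_loc a b n _ (Derive (fun y => sqrt (f y))) _ HC n x (Nat.le_refl n) Hx).
        intros y Hy. symmetry. apply is_derive_unique. apply is_derive_sqrt.
        apply Derive_correct; exd Hf. apply Hp; auto.
Qed.

Definition gsmooth (f : R -> R) := forall n x, ex_derive_n f n x.

Lemma gsmooth_Cn a b n f : gsmooth f -> Cn a b n f.
Proof. intros H k x _ _. apply H. Qed.

Lemma Cn_gsmooth f : (forall n a b, Cn a b n f) -> gsmooth f.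
Proof. intros H n x. apply (H n (x-1) (x+1) n x); auto; lra. Qed.

Lemma gs_mult f g : gsmooth f -> gsmooth g -> gsmooth (fun x => f x * g x).
Proof. intros. apply Cn_gsmooth. intros. apply Cn_mult; apply gsmooth_Cn; auto. Qed.
Lemma gs_plus f g : gsmooth f -> gsmooth g -> gsmooth (fun x => f x + g x).
Proof. intros. apply Cn_gsmooth. intros. apply Cn_plus; apply gsmooth_Cn; auto. Qed.
Lemma gs_minus f g : gsmooth f -> gsmooth g -> gsmooth (fun x => f x - g x).
Proof. intros. apply Cn_gsmooth. intros. apply Cn_minus; apply gsmooth_Cn; auto. Qed.
Lemma gs_const c : gsmooth (fun _ => c).
Proof. intros n x. apply ex_derive_n_const. Qed.
Lemma gs_id : gsmooth (fun x => x).
Proof. intros n x. apply (ex_derive_n_pow n 1 x) || (eapply ex_derive_n_ext; [|apply (ex_derive_n_pow n 1 x)]; intros; simpl; ring). Qed.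
Lemma gs_ext f g : (forall x, f x = g x) -> gsmooth f -> gsmooth g.
Proof. intros E H n x. eapply ex_derive_n_ext; eauto. Qed.
Lemma gs_Derive f : gsmooth f -> gsmooth (Derive f).
Proof. intros H n x. apply exdn_down. apply H. Qed.
Lemma gs_exd f x : gsmooth f -> ex_derive f x.
Proof. intros H. apply (H 1%nat x). Qed.
Lemma gs_cont_D f x : gsmooth f -> continuous (Derive f) x.
Proof. intros H. apply (@ex_derive_continuous R_AbsRing R_NormedModule). apply (H 2%nat x). Qed.
Lemma gs_cont f x : gsmooth f -> continuous f x.
Proof. intros H. apply (@ex_derive_continuous R_AbsRing R_NormedModule). apply (H 1%nat x). Qed.


Definition K (p g : R -> R) (c s : R) := RInt (fun t => p t * g (t * (s - c) + c)) 0 1.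

Lemma D1 (p g : R -> R) c t u : ex_derive g (t*(u-c)+c) ->
  is_derive (fun u => p t * g (t*(u-c)+c)) u (p t * (t * Derive g (t*(u-c)+c))).
Proof.
  intros H. auto_derive. exact H. replace (u + - c) with (u - c) by ring. change (fun x : R => g x) with g. ring.
Qed.

Lemma cont_lin t c s : continuous (fun t => t * (s - c) + c) t.
Proof. apply (@ex_derive_continuous R_AbsRing R_NormedModule). auto_derive. exact I. Qed.

Lemma K_integrable p g c s : (forall t, continuous p t) -> (forall y, continuous g y) ->
  ex_RInt (fun t => p t * g (t * (s - c) + c)) 0 1.
Proof.
  intros Hp Hg. apply (@ex_RInt_continuous R_CompleteNormedModule). intros z _.
  apply (continuous_mult p (fun t => g (t * (s - c) + c))). apply Hp.
  apply (continuous_comp (fun t => t * (s - c) + c) g). apply cont_lin. apply Hg.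
Qed.

Lemma K_is_derive p g c s : (forall t, continuous p t) -> (forall y, ex_derive g y) ->
  (forall y, continuous (Derive g) y) ->
  is_derive (K p g c) s (K (fun t => p t * t) (Derive g) c s).
Proof.
  intros Hp Hg Hdg. unfold K.
  assert (E : RInt (fun t => p t * t * Derive g (t * (s - c) + c)) 0 1 =
              RInt (fun t => Derive (fun u => p t * g (t*(u-c)+c)) s) 0 1).
  { apply (@RInt_ext R_CompleteNormedModule). intros t _. change (p t * t * Derive g (t*(s-c)+c) = Derive (fun u => p t * g (t*(u-c)+c)) s). transitivity (p t * (t * Derive g (t*(s-c)+c))); [ring|]. symmetry. apply is_derive_unique. apply D1. apply Hg. }
  rewrite E.
  apply (is_derive_RInt_param (fun u t => p t * g (t*(u-c)+c))).
  - apply filter_forall. intros y t _. eexists. apply D1. apply Hg.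
  - intros t _.
    apply continuity_2d_pt_ext with (f := fun u v => p v * (v * Derive g (v*(u-c)+c))).
    { intros u v. symmetry. apply is_derive_unique. apply D1. apply Hg. }
    apply continuity_2d_pt_mult.
    + apply (continuity_1d_2d_pt_comp p (fun _ v => v)).
      apply continuity_pt_filterlim. apply Hp. apply continuity_2d_pt_id2.
    + apply continuity_2d_pt_mult. apply continuity_2d_pt_id2.
      apply (continuity_1d_2d_pt_comp (Derive g) (fun u v => v*(u-c)+c)).
      apply continuity_pt_filterlim. apply Hdg.
      apply continuity_2d_pt_plus; [|apply continuity_2d_pt_const].
      apply continuity_2d_pt_mult. apply continuity_2d_pt_id2.
      apply continuity_2d_pt_minus. apply continuity_2d_pt_id1. apply continuity_2d_pt_const.
  - apply filter_forall. intros y. apply K_integrable. exact Hp.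
    intros z. apply (@ex_derive_continuous R_AbsRing R_NormedModule). apply Hg.
Qed.

Lemma K_Derive p g c s : (forall t, continuous p t) -> gsmooth g ->
  Derive (K p g c) s = K (fun t => p t * t) (Derive g) c s.
Proof.
  intros Hp Hg. apply is_derive_unique. apply K_is_derive; auto.
  intros; apply gs_exd; auto. intros; apply gs_cont_D; auto.
Qed.

Lemma cont_mult_id p : (forall t, continuous p t) -> forall t, continuous (fun t => p t * t) t.
Proof.
  intros Hp t. apply (continuous_mult p (fun t => t)). apply Hp. apply continuous_id.
Qed.

Lemma K_smooth_aux n : forall p g c, (forall t, continuous p t) -> gsmooth g ->
  forall s, ex_derive_n (K p g c) n s.
Proof.
  induction n as [|n IH]; intros p g c Hp Hg s; [exact I|].
  apply exdn_up.
  - eexists. apply K_is_derive; auto. intros; apply gs_exd; auto. intros; apply gs_cont_D; auto.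
  - eapply ex_derive_n_ext. intros t. symmetry. apply K_Derive; auto.
    apply IH. apply cont_mult_id; auto. apply gs_Derive; auto.
Qed.

Lemma K_smooth p g c : (forall t, continuous p t) -> gsmooth g -> gsmooth (K p g c).
Proof. intros Hp Hg n s. apply K_smooth_aux; auto. Qed.

Lemma K_at_c g c : K (fun _ => 1) g c c = g c.
Proof.
  unfold K. rewrite (@RInt_ext R_CompleteNormedModule _ (fun _ => g c)).
  - rewrite RInt_const. change (scal (1 - 0) (g c)) with (Rmult (1 - 0) (g c)). change (Rmult (1 - 0) (g c) = g c). ring.
  - intros t _. rewrite Rmult_1_l. replace (t * (c - c) + c) with c by ring. reflexivity.
Qed.

Lemma hadamard f c s : (forall y, ex_derive f y) -> (forall y, continuous (Derive f) y) ->
  f s - f c = (s - c) * K (fun _ => 1) (Derive f) c s.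
Proof.
  intros Hd Hc. unfold K.
  assert (Hint : ex_RInt (Derive f) ((s-c)*0+c) ((s-c)*1+c)).
  { apply (@ex_RInt_continuous R_CompleteNormedModule). intros; apply Hc. }
  pose proof (RInt_comp_lin (V:=R_CompleteNormedModule) (Derive f) (s-c) c 0 1 Hint) as H.
  assert (E1 : (s-c)*0+c = c) by ring. assert (E2 : (s-c)*1+c = s) by ring.
  rewrite E1, E2 in H.
  rewrite RInt_Derive in H; [| intros; apply Hd | intros; apply Hc].
  rewrite <- H.
  rewrite (@RInt_ext R_CompleteNormedModule _ (fun y => scal (s-c) (1 * Derive f (y * (s - c) + c)))).
  - rewrite (@RInt_scal R_CompleteNormedModule). reflexivity.
    apply K_integrable. intros; apply continuous_const. exact Hc.
  - intros t _. change ((s-c) * Derive f ((s-c)*t + c) = (s-c) * (1 * Derive f (t * (s - c) + c))).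
    rewrite Rmult_1_l. f_equal. f_equal. ring.
Qed.

Lemma K_bound p g c s G : (forall t, continuous p t) -> (forall y, continuous g y) ->
  (forall t, 0 <= t <= 1 -> Rabs (p t) <= 1) -> (forall y, Rabs (g y) <= G) ->
  Rabs (K p g c s) <= G.
Proof.
  intros Hp Hg Hpb Hgb. unfold K.
  eapply Rle_trans. apply abs_RInt_le_const with (M := G). lra.
  apply K_integrable; auto.
  intros t Ht. rewrite Rabs_mult.
  specialize (Hpb t Ht). specialize (Hgb (t * (s - c) + c)).
  pose proof (Rabs_pos (p t)). pose proof (Rabs_pos (g (t * (s - c) + c))).
  nra. lra.
Qed.

Lemma K_weight E c s : (forall y, continuous E y) ->
  K (fun _ => 1) (fun r => (r - c)^2 * E r) c s = (s - c)^2 * K (fun t => t^2) E c s.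
Proof.
  intros HE. unfold K.
  rewrite <- (RInt_scal (V:=R_CompleteNormedModule)).
  - apply (@RInt_ext R_CompleteNormedModule). intros t _.
    change (1 * ((t * (s - c) + c - c) ^ 2 * E (t * (s - c) + c)) = (s-c)^2 * (t^2 * E (t * (s - c) + c))).
    ring.
  - apply K_integrable; auto. intros t. apply (@ex_derive_continuous R_AbsRing R_NormedModule). auto_derive. exact I.
Qed.


Definition one := fun _ : R => 1.
Lemma cont_one t : continuous one t.
Proof. apply continuous_const. Qed.
Lemma cont_pow k t : continuous (fun t => t ^ k) t.
Proof. apply (@ex_derive_continuous R_AbsRing R_NormedModule). auto_derive. exact I. Qed.

Lemma sqrt4 t m : 0 <= m -> sqrt (sqrt (t ^ 4 * m)) = Rabs t * sqrt (sqrt m).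
Proof.
  intros Hm.
  replace (t ^ 4 * m) with ((t^2)^2 * m) by ring.
  rewrite sqrt_mult_alt by nra. rewrite sqrt_pow2 by nra.
  rewrite sqrt_mult_alt by nra. rewrite <- sqrt_Rsqr_abs. unfold Rsqr. f_equal. f_equal. ring.
Qed.

Section Main.
Variables gx gy gu : R -> R.
Hypothesis Sx : gsmooth gx.
Hypothesis Sy : gsmooth gy.
Hypothesis Su : gsmooth gu.
Hypothesis Leg : forall s, Derive gu s = / 2 * (gx s * Derive gy s - gy s * Derive gx s).
Variable c : R.

Definition a1 := K one (Derive gx) c.
Definition a2 := K one (Derive gy) c.
Definition w r := a1 r * Derive gy r - a2 r * Derive gx r.
Definition E r := / 2 * K one (Derive w) c r.
Definition b := K (fun t => t ^ 2) E c.
Definition M r := (a1 r ^ 2 + a2 r ^ 2) ^ 2 + 16 * (r - c) ^ 2 * b r ^ 2.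
Definition Du r := - gu c + gu r + / 2 * (- gx c * gy r - gx r * - gy c).

Lemma S_a1 : gsmooth a1.
Proof. apply K_smooth. apply cont_one. apply gs_Derive; auto. Qed.
Lemma S_a2 : gsmooth a2.
Proof. apply K_smooth. apply cont_one. apply gs_Derive; auto. Qed.
Lemma S_w : gsmooth w.
Proof.
  unfold w. apply gs_minus; apply gs_mult; auto using S_a1, S_a2, gs_Derive.
Qed.
Lemma S_E : gsmooth E.
Proof.
  unfold E. apply gs_mult. apply gs_const. apply K_smooth. apply cont_one. apply gs_Derive, S_w.
Qed.
Lemma S_b : gsmooth b.
Proof. apply K_smooth. apply cont_pow. apply S_E. Qed.
Lemma S_M : gsmooth M.
Proof.
  unfold M.
  assert (Hp2 : forall f, gsmooth f -> gsmooth (fun r => f r ^ 2)).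
  { intros f Hf. eapply gs_ext; [|apply (gs_mult f f); auto]. intros; simpl; ring. }
  apply gs_plus.
  - apply Hp2. apply gs_plus; apply Hp2; auto using S_a1, S_a2.
  - apply gs_mult. apply gs_mult. apply gs_const. apply Hp2. apply gs_minus. apply gs_id. apply gs_const.
    apply Hp2, S_b.
Qed.

Lemma had f s : gsmooth f -> f s - f c = (s - c) * K one (Derive f) c s.
Proof. intros Hf. apply hadamard; intros; [apply gs_exd|apply gs_cont_D]; auto. Qed.

Lemma dx r : gx r - gx c = (r - c) * a1 r.
Proof. apply had; auto. Qed.
Lemma dy r : gy r - gy c = (r - c) * a2 r.
Proof. apply had; auto. Qed.

Lemma w_c : w c = 0.
Proof. unfold w, a1, a2. rewrite !K_at_c. ring. Qed.

Lemma w_eq r : w r = 2 * (r - c) * E r.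
Proof.
  assert (H := had w r S_w). rewrite w_c in H. unfold E. lra.
Qed.

Lemma Du_deriv r : Derive Du r = (r - c) ^ 2 * E r.
Proof.
  assert (H : is_derive Du r (Derive gu r + / 2 * (- gx c * Derive gy r - Derive gx r * - gy c))).
  { unfold Du. auto_derive.
    - repeat split; apply gs_exd; auto.
    - change (fun x => gu x) with gu. change (fun x => gy x) with gy. change (fun x => gx x) with gx. ring. }
  rewrite (is_derive_unique _ _ _ H). rewrite Leg.
  transitivity (/2 * ((gx r - gx c) * Derive gy r - (gy r - gy c) * Derive gx r)); [ring|].
  rewrite dx, dy. transitivity (/2 * (r - c) * w r); [unfold w; ring|].
  rewrite w_eq. field.
Qed.

Lemma S_Du : gsmooth Du.
Proof.
  unfold Du. apply gs_plus. apply gs_plus. apply gs_const. auto.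
  apply gs_mult. apply gs_const. apply gs_minus; apply gs_mult; auto using gs_const.
Qed.

Lemma Du_eq r : Du r = (r - c) ^ 3 * b r.
Proof.
  assert (H := had Du r S_Du).
  assert (H0 : Du c = 0) by (unfold Du; ring).
  rewrite H0, Rminus_0_r in H. rewrite H.
  replace (Derive Du) with (fun r => (r - c) ^ 2 * E r).
  2:{ apply functional_extensionality. intros; rewrite Du_deriv; auto. }
  unfold one. rewrite K_weight. unfold b. ring.
  intros; apply gs_cont, S_E.
Qed.

Lemma M_nonneg r : 0 <= M r.
Proof. unfold M. assert (0 <= (r-c)^2 * b r ^ 2) by (apply Rmult_le_pos; apply pow2_ge_0). nra. Qed.

Lemma chord_eq r : chord_H gx gy gu c r = (r - c) * sqrt (sqrt (M r)).
Proof.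
  assert (Hm : ((gx r - gx c) ^ 2 + (gy r - gy c) ^ 2) ^ 2 + 16 * Du r ^ 2 = (r - c) ^ 4 * M r).
  { rewrite dx, dy, Du_eq. unfold M. ring. }
  assert (Hk : koranyi_dist (curve gx gy gu c) (curve gx gy gu r) = Rabs (r - c) * sqrt (sqrt (M r))).
  { unfold koranyi_dist, koranyi_norm, hmul, hinv, curve.
    rewrite <- sqrt4 by apply M_nonneg. rewrite <- Hm. unfold Du.
    f_equal. f_equal. ring. }
  unfold chord_H. rewrite Hk.
  destruct (Rlt_dec c r).
  - rewrite Rabs_right by lra. ring.
  - destruct (Rlt_dec r c).
    + rewrite Rabs_left by lra. ring.
    + assert (r = c) by lra. subst. ring.
Qed.


Lemma ab_mul x y X Y : Rabs x <= X -> Rabs y <= Y -> Rabs (x*y) <= X*Y.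
Proof. intros H1 H2. rewrite Rabs_mult. pose proof (Rabs_pos x). pose proof (Rabs_pos y). nra. Qed.
Lemma ab_add x y X Y : Rabs x <= X -> Rabs y <= Y -> Rabs (x+y) <= X+Y.
Proof. intros H1 H2. pose proof (Rabs_triang x y). lra. Qed.
Lemma ab_sub x y X Y : Rabs x <= X -> Rabs y <= Y -> Rabs (x-y) <= X+Y.
Proof. intros H1 H2. pose proof (Rabs_triang x (-y)). rewrite Rabs_Ropp in H. unfold Rminus. lra. Qed.

Lemma w1 t : 0 <= t <= 1 -> Rabs (one t) <= 1.
Proof. intros; unfold one; rewrite Rabs_R1; lra. Qed.
Lemma w2 t : 0 <= t <= 1 -> Rabs (one t * t) <= 1.
Proof. intros; unfold one; rewrite Rmult_1_l, Rabs_right; lra. Qed.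
Lemma w3 t : 0 <= t <= 1 -> Rabs (one t * t * t) <= 1.
Proof. intros; unfold one; rewrite Rmult_1_l, Rabs_right; nra. Qed.
Lemma w4 t : 0 <= t <= 1 -> Rabs (t ^ 2) <= 1.
Proof. intros; rewrite Rabs_right; nra. Qed.
Lemma w5 t : 0 <= t <= 1 -> Rabs (t ^ 2 * t) <= 1.
Proof. intros; rewrite Rabs_right; [|nra]. simpl. assert (0 <= t*t <= 1) by nra. nra. Qed.

Lemma cont_w2 t : continuous (fun t => one t * t) t.
Proof. apply cont_mult_id. apply cont_one. Qed.
Lemma cont_w3 t : continuous (fun t => one t * t * t) t.
Proof. apply cont_mult_id. apply cont_w2. Qed.
Lemma cont_w5 t : continuous (fun t => t ^ 2 * t) t.
Proof. apply cont_mult_id. apply cont_pow. Qed.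

Lemma Da1 r : Derive a1 r = K (fun t => one t * t) (Derive (Derive gx)) c r.
Proof. apply K_Derive. apply cont_one. apply gs_Derive; auto. Qed.
Lemma Da2 r : Derive a2 r = K (fun t => one t * t) (Derive (Derive gy)) c r.
Proof. apply K_Derive. apply cont_one. apply gs_Derive; auto. Qed.
Lemma DDa1 r : Derive (Derive a1) r = K (fun t => one t * t * t) (Derive (Derive (Derive gx))) c r.
Proof.
  rewrite (Derive_ext _ _ r Da1). apply K_Derive. apply cont_w2. apply gs_Derive, gs_Derive; auto.
Qed.
Lemma DDa2 r : Derive (Derive a2) r = K (fun t => one t * t * t) (Derive (Derive (Derive gy))) c r.
Proof.
  rewrite (Derive_ext _ _ r Da2). apply K_Derive. apply cont_w2. apply gs_Derive, gs_Derive; auto.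
Qed.

Lemma Dw r : Derive w r = Derive a1 r * Derive gy r + a1 r * Derive (Derive gy) r
   - (Derive a2 r * Derive gx r + a2 r * Derive (Derive gx) r).
Proof.
  apply is_derive_unique. unfold w. auto_derive.
  - repeat split; apply gs_exd; auto using S_a1, S_a2, gs_Derive.
  - change (fun x => a1 x) with a1. change (fun x => a2 x) with a2.
    change (fun x => Derive gx x) with (Derive gx). change (fun x => Derive gy x) with (Derive gy). ring.
Qed.

Lemma DDw r : Derive (Derive w) r =
  Derive (Derive a1) r * Derive gy r + 2 * Derive a1 r * Derive (Derive gy) r + a1 r * Derive (Derive (Derive gy)) r
  - (Derive (Derive a2) r * Derive gx r + 2 * Derive a2 r * Derive (Derive gx) r + a2 r * Derive (Derive (Derive gx)) r).
Proof.
  rewrite (Derive_ext _ _ r Dw).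
  apply is_derive_unique. auto_derive.
  - repeat split; apply gs_exd; auto 6 using S_a1, S_a2, gs_Derive.
  - change (fun x => a1 x) with a1. change (fun x => a2 x) with a2.
    change (fun x => Derive a1 x) with (Derive a1). change (fun x => Derive a2 x) with (Derive a2).
    change (fun x => Derive gx x) with (Derive gx). change (fun x => Derive gy x) with (Derive gy).
    change (fun x => Derive (Derive gx) x) with (Derive (Derive gx)). change (fun x => Derive (Derive gy) x) with (Derive (Derive gy)).
    ring.
Qed.

Lemma DE r : Derive E r = / 2 * K (fun t => one t * t) (Derive (Derive w)) c r.
Proof.
  unfold E. rewrite Derive_scal. f_equal. apply K_Derive. apply cont_one. apply gs_Derive, S_w.
Qed.

Lemma Db r : Derive b r = K (fun t => t ^ 2 * t) (Derive E) c r.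
Proof. apply K_Derive. apply cont_pow. apply S_E. Qed.

Lemma DM r : Derive M r = 2 * (a1 r ^ 2 + a2 r ^ 2) * (2 * a1 r * Derive a1 r + 2 * a2 r * Derive a2 r)
   + 16 * (2 * (r - c) * b r ^ 2 + (r - c) ^ 2 * (2 * b r * Derive b r)).
Proof.
  apply is_derive_unique. unfold M. auto_derive.
  - repeat split; apply gs_exd; auto using S_a1, S_a2, S_b.
  - change (fun x => a1 x) with a1. change (fun x => a2 x) with a2. change (fun x => b x) with b. ring.
Qed.

Variable B : R.
Hypothesis HB1 : 1 <= B.
Hypothesis Hx1 : forall y, Rabs (Derive gx y) <= 1.
Hypothesis Hy1 : forall y, Rabs (Derive gy y) <= 1.
Hypothesis Hx2 : forall y, Rabs (Derive (Derive gx) y) <= B.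
Hypothesis Hy2 : forall y, Rabs (Derive (Derive gy) y) <= B.
Hypothesis Hx3 : forall y, Rabs (Derive (Derive (Derive gx)) y) <= B.
Hypothesis Hy3 : forall y, Rabs (Derive (Derive (Derive gy)) y) <= B.

Ltac gc := intros; repeat (apply gs_cont || apply gs_Derive); auto using S_w, S_E, S_a1, S_a2.

Lemma Ba1 r : Rabs (a1 r) <= 1.
Proof. apply K_bound; [apply cont_one|intros y; exact (gs_cont_D _ y Sx)|apply w1|exact Hx1]. Qed.
Lemma Ba2 r : Rabs (a2 r) <= 1.
Proof. apply K_bound; [apply cont_one|intros y; exact (gs_cont_D _ y Sy)|apply w1|exact Hy1]. Qed.
Lemma BDa1 r : Rabs (Derive a1 r) <= B.
Proof. rewrite Da1. apply K_bound; [apply cont_w2|intros y; exact (gs_cont_D _ y (gs_Derive _ Sx))|apply w2|exact Hx2]. Qed.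
Lemma BDa2 r : Rabs (Derive a2 r) <= B.
Proof. rewrite Da2. apply K_bound; [apply cont_w2|intros y; exact (gs_cont_D _ y (gs_Derive _ Sy))|apply w2|exact Hy2]. Qed.
Lemma BDDa1 r : Rabs (Derive (Derive a1) r) <= B.
Proof. rewrite DDa1. apply K_bound; [apply cont_w3|intros y; exact (gs_cont_D _ y (gs_Derive _ (gs_Derive _ Sx)))|apply w3|exact Hx3]. Qed.
Lemma BDDa2 r : Rabs (Derive (Derive a2) r) <= B.
Proof. rewrite DDa2. apply K_bound; [apply cont_w3|intros y; exact (gs_cont_D _ y (gs_Derive _ (gs_Derive _ Sy)))|apply w3|exact Hy3]. Qed.

Lemma BDw r : Rabs (Derive w r) <= 4 * B.
Proof.
  rewrite Dw. eapply Rle_trans.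
  apply ab_sub; apply ab_add; apply ab_mul; auto using Ba1, Ba2, BDa1, BDa2.
  lra.
Qed.

Lemma BDDw r : Rabs (Derive (Derive w) r) <= 8 * B ^ 2.
Proof.
  rewrite DDw. eapply Rle_trans.
  apply ab_sub; repeat apply ab_add; try apply ab_mul; try apply ab_mul; auto using Ba1, Ba2, BDa1, BDa2, BDDa1, BDDa2.
  - rewrite Rabs_right by lra. apply Rle_refl.
  - rewrite Rabs_right by lra. apply Rle_refl.
  - nra.
Qed.

Lemma BE r : Rabs (E r) <= 2 * B.
Proof.
  unfold E. replace (2 * B) with (/2 * (4 * B)) by field.
  apply ab_mul. rewrite Rabs_right; lra.
  apply K_bound; [apply cont_one|intros y; exact (gs_cont_D _ y S_w)|apply w1|apply BDw].
Qed.

Lemma BDE r : Rabs (Derive E r) <= 4 * B ^ 2.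
Proof.
  rewrite DE. replace (4 * B ^ 2) with (/2 * (8 * B ^ 2)) by field.
  apply ab_mul. rewrite Rabs_right; lra.
  apply K_bound; [apply cont_w2|intros y; exact (gs_cont_D _ y (gs_Derive _ S_w))|apply w2|apply BDDw].
Qed.

Lemma Bb r : Rabs (b r) <= 2 * B.
Proof. apply K_bound; [apply cont_pow|intros y; exact (gs_cont _ y S_E)|apply w4|apply BE]. Qed.

Lemma BDb r : Rabs (Derive b r) <= 4 * B ^ 2.
Proof. rewrite Db. apply K_bound; [apply cont_w5|intros y; exact (gs_cont_D _ y S_E)|apply w5|apply BDE]. Qed.

Lemma ab_sq x X : Rabs x <= X -> Rabs (x ^ 2) <= X ^ 2.
Proof. intros H. rewrite <- RPow_abs. apply pow_incr. split; [apply Rabs_pos|exact H]. Qed.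

Lemma BDM r : Rabs (Derive M r) <= 16 * B + 128 * Rabs (r - c) * B ^ 2 + 256 * Rabs (r - c) ^ 2 * B ^ 3.
Proof.
  rewrite DM. set (T := Rabs (r - c)).
  assert (H2 : Rabs 2 <= 2) by (rewrite Rabs_right; lra).
  assert (H16 : Rabs 16 <= 16) by (rewrite Rabs_right; lra).
  apply Rle_trans with (2 * (1 ^ 2 + 1 ^ 2) * (2 * 1 * B + 2 * 1 * B)
     + 16 * (2 * T * (2 * B) ^ 2 + T ^ 2 * (2 * (2 * B) * (4 * B ^ 2)))).
  - apply ab_add.
    + apply ab_mul. apply ab_mul. exact H2. apply ab_add; apply ab_sq; [apply Ba1|apply Ba2].
      apply ab_add; apply ab_mul; [apply ab_mul; [exact H2|apply Ba1] | apply BDa1 | apply ab_mul; [exact H2|apply Ba2] | apply BDa2].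
    + apply ab_mul. exact H16. apply ab_add.
      * apply ab_mul. apply ab_mul. exact H2. apply Rle_refl. apply ab_sq. apply Bb.
      * apply ab_mul. apply ab_sq. apply Rle_refl. apply ab_mul. apply ab_mul. exact H2. apply Bb. apply BDb.
  - right. ring.
Qed.

Hypothesis AL : forall s, Derive gx s ^ 2 + Derive gy s ^ 2 = 1.

Lemma a1_near r : Rabs (a1 r - Derive gx c) <= Rabs (r - c) * B.
Proof.
  assert (H := had a1 r S_a1). unfold a1 in H at 2. rewrite K_at_c in H. fold a1 in H.
  rewrite H. rewrite Rabs_mult. apply Rmult_le_compat_l. apply Rabs_pos.
  apply K_bound; [apply cont_one|intros y; exact (gs_cont_D _ y S_a1)|apply w1|apply BDa1].
Qed.
Lemma a2_near r : Rabs (a2 r - Derive gy c) <= Rabs (r - c) * B.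
Proof.
  assert (H := had a2 r S_a2). unfold a2 in H at 2. rewrite K_at_c in H. fold a2 in H.
  rewrite H. rewrite Rabs_mult. apply Rmult_le_compat_l. apply Rabs_pos.
  apply K_bound; [apply cont_one|intros y; exact (gs_cont_D _ y S_a2)|apply w1|apply BDa2].
Qed.

Lemma final_c r : Rabs (r - c) * B <= / 64 -> 1 / 4 <= M r /\ Rabs ((r - c) * Derive M r) <= 1 / 2.
Proof.
  intros Hu. set (u := Rabs (r - c) * B) in Hu.
  assert (Hu0 : 0 <= u) by (unfold u; pose proof (Rabs_pos (r-c)); nra).
  split.
  - set (X := Derive gx c) in *. set (Y := Derive gy c) in *.
    set (al := a1 r - X). set (be := a2 r - Y).
    assert (Hal : Rabs al <= u) by apply a1_near.
    assert (Hbe : Rabs be <= u) by apply a2_near.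
    assert (HXY : X ^ 2 + Y ^ 2 = 1) by apply AL.
    assert (HX : Rabs (X * al) <= 1 * u) by (apply ab_mul; [apply Hx1|exact Hal]).
    assert (HY : Rabs (Y * be) <= 1 * u) by (apply ab_mul; [apply Hy1|exact Hbe]).
    apply Rabs_le_between in HX. apply Rabs_le_between in HY.
    assert (HS : a1 r ^ 2 + a2 r ^ 2 >= 1 - 4 * u).
    { replace (a1 r) with (X + al) by (unfold al; ring). replace (a2 r) with (Y + be) by (unfold be; ring).
      nra. }
    unfold M. assert (0 <= 16 * (r - c) ^ 2 * b r ^ 2).
    { apply Rmult_le_pos. apply Rmult_le_pos. lra. apply pow2_ge_0. apply pow2_ge_0. }
    assert (1 - 4 * u >= 15/16) by lra. nra.
  - rewrite Rabs_mult. eapply Rle_trans.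
    apply Rmult_le_compat_l. apply Rabs_pos. apply BDM.
    set (T := Rabs (r - c)) in *.
    assert (HT : 0 <= T) by apply Rabs_pos.
    replace (T * (16 * B + 128 * T * B ^ 2 + 256 * T ^ 2 * B ^ 3)) with (16 * u + 128 * u ^ 2 + 256 * u ^ 3) by (unfold u; ring).
    assert (u ^ 2 <= /64 * u) by nra. assert (u ^ 3 <= /64 * u ^ 2) by (simpl; nra). nra.
Qed.
End Main.


Lemma per_nat (f : R -> R) L : (forall s, f (s + L) = f s) -> forall n s, f (s + INR n * L) = f s.
Proof.
  intros Hp n. induction n as [|n IH]; intros s.
  - simpl. f_equal. ring.
  - rewrite S_INR. replace (s + (INR n + 1) * L) with ((s + INR n * L) + L) by ring.
    rewrite Hp. apply IH.
Qed.

Lemma per_Z (f : R -> R) L : (forall s, f (s + L) = f s) -> forall z s, f (s + IZR z * L) = f s.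
Proof.
  intros Hp z s. destruct z as [|p|p].
  - simpl. f_equal. ring.
  - change (IZR (Zpos p)) with (IPR p). rewrite <- INR_IPR. apply per_nat; auto.
  - change (IZR (Zneg p)) with (- IPR p). rewrite <- INR_IPR.
    rewrite <- (per_nat f L Hp (Pos.to_nat p) (s + - INR (Pos.to_nat p) * L)).
    f_equal. ring.
Qed.

Lemma per_bound (f : R -> R) L : 0 < L -> (forall s, f (s + L) = f s) -> (forall s, continuous f s) ->
  exists B, forall s, Rabs (f s) <= B.
Proof.
  intros HL Hp Hc.
  destruct (continuity_ab_maj (fun x => Rabs (f x)) 0 L) as [m [Hm _]].
  - lra.
  - intros x _. apply (continuity_pt_comp f Rabs). apply continuity_pt_filterlim. apply Hc.
    apply Rcontinuity_abs.
  - exists (Rabs (f m)). intros s.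
    set (z := Int_part (s / L)).
    destruct (base_Int_part (s / L)) as [H1 H2]. fold z in H1, H2.
    assert (E : s = (s - IZR z * L) + IZR z * L) by ring.
    rewrite E, per_Z by auto. apply Hm.
    assert (IZR z * L <= s / L * L) by (apply Rmult_le_compat_r; lra).
    assert (s / L * L = s) by (field; lra).
    assert (s / L * L < (IZR z + 1) * L) by (apply Rmult_lt_compat_r; lra).
    nra.
Qed.

Lemma Dn_per (f : R -> R) L k : (forall s, f (s + L) = f s) -> forall s, Derive_n f k (s + L) = Derive_n f k s.
Proof.
  intros Hp s. rewrite <- Derive_n_comp_trans. apply Derive_n_ext. intros; apply Hp.
Qed.

Lemma Dn_bound (f : R -> R) L k : 0 < L -> (forall s, f (s + L) = f s) -> gsmooth f ->
  exists B, forall s, Rabs (Derive_n f k s) <= B.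
Proof.
  intros HL Hp Hs. apply (per_bound _ L HL).
  - apply Dn_per; auto.
  - intros s. apply (@ex_derive_continuous R_AbsRing R_NormedModule). apply (Hs (S k) s).
Qed.

Theorem lemma2p2 (gx gy gu : R -> R) (L : R) :
  legendrian_knot_al gx gy gu L ->
  exists delta : R, 0 < delta /\
    forall s0 : R,
      (forall (n : nat) (s : R), Rabs (s - s0) < delta ->
         ex_derive_n (chord_H gx gy gu s0) n s) /\
      (forall s : R, Rabs (s - s0) < delta ->
         0 < Derive (chord_H gx gy gu s0) s).
Proof.
  intros (HL & Sx & Sy & Su & Leg & AL & Per & _).
  assert (Px : forall s, gx (s + L) = gx s).
  { intros s. specialize (Per s). unfold curve in Per. congruence. }
  assert (Py : forall s, gy (s + L) = gy s).
  { intros s. specialize (Per s). unfold curve in Per. congruence. }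
  destruct (Dn_bound gx L 2 HL Px Sx) as [Bx2 HBx2].
  destruct (Dn_bound gx L 3 HL Px Sx) as [Bx3 HBx3].
  destruct (Dn_bound gy L 2 HL Py Sy) as [By2 HBy2].
  destruct (Dn_bound gy L 3 HL Py Sy) as [By3 HBy3].
  set (B := Rmax 1 (Rmax (Rmax Bx2 Bx3) (Rmax By2 By3))).
  assert (HB1 : 1 <= B) by apply Rmax_l.
  assert (HBx2' : Bx2 <= B).
  { unfold B. eapply Rle_trans; [|apply Rmax_r]. eapply Rle_trans; [|apply Rmax_l]. apply Rmax_l. }
  assert (HBx3' : Bx3 <= B).
  { unfold B. eapply Rle_trans; [|apply Rmax_r]. eapply Rle_trans; [|apply Rmax_l]. apply Rmax_r. }
  assert (HBy2' : By2 <= B).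
  { unfold B. eapply Rle_trans; [|apply Rmax_r]. eapply Rle_trans; [|apply Rmax_r]. apply Rmax_l. }
  assert (HBy3' : By3 <= B).
  { unfold B. eapply Rle_trans; [|apply Rmax_r]. eapply Rle_trans; [|apply Rmax_r]. apply Rmax_r. }
  assert (Hx1 : forall y, Rabs (Derive gx y) <= 1).
  { intros y. specialize (AL y). rewrite <- (pow2_abs (Derive gx y)) in AL.
    pose proof (Rabs_pos (Derive gx y)). pose proof (pow2_ge_0 (Derive gy y)). nra. }
  assert (Hy1 : forall y, Rabs (Derive gy y) <= 1).
  { intros y. specialize (AL y). rewrite <- (pow2_abs (Derive gy y)) in AL.
    pose proof (Rabs_pos (Derive gy y)). pose proof (pow2_ge_0 (Derive gx y)). nra. }
  assert (Hx2 : forall y, Rabs (Derive (Derive gx) y) <= B).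
  { intros y. eapply Rle_trans; [apply (HBx2 y)|exact HBx2']. }
  assert (Hx3 : forall y, Rabs (Derive (Derive (Derive gx)) y) <= B).
  { intros y. eapply Rle_trans; [apply (HBx3 y)|exact HBx3']. }
  assert (Hy2 : forall y, Rabs (Derive (Derive gy) y) <= B).
  { intros y. eapply Rle_trans; [apply (HBy2 y)|exact HBy2']. }
  assert (Hy3 : forall y, Rabs (Derive (Derive (Derive gy)) y) <= B).
  { intros y. eapply Rle_trans; [apply (HBy3 y)|exact HBy3']. }
  assert (Hd : 0 < / (64 * B)) by (apply Rinv_0_lt_compat; lra).
  exists (/ (64 * B)). split; [exact Hd|].
  intros c.
  assert (Hfin : forall r, Rabs (r - c) < / (64 * B) ->
            1 / 4 <= M gx gy c r /\ Rabs ((r - c) * Derive (M gx gy c) r) <= 1 / 2).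
  { intros r Hr. apply (final_c gx gy Sx Sy c B HB1 Hx1 Hy1 Hx2 Hy2 Hx3 Hy3 AL).
    replace (/ 64) with (/ (64 * B) * B) by (field; lra).
    apply Rmult_le_compat_r; lra. }
  assert (Mpos : forall r, c - / (64 * B) < r < c + / (64 * B) -> 0 < M gx gy c r).
  { intros r Hr. assert (Rabs (r - c) < / (64 * B)) by (apply Rabs_def1; lra).
    destruct (Hfin r H). lra. }
  split.
  - intros n s Hs.
    eapply ex_derive_n_ext. intros t. symmetry. apply (chord_eq gx gy gu Sx Sy Su Leg c t).
    assert (HC : Cn (c - / (64 * B)) (c + / (64 * B)) n
                   (fun r => (r - c) * sqrt (sqrt (M gx gy c r)))).
    { apply Cn_mult.
      - apply Cn_minus; apply gsmooth_Cn; [apply gs_id|apply gs_const].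
      - apply Cn_sqrt. apply Cn_sqrt. apply gsmooth_Cn. apply S_M; auto.
        exact Mpos.
        intros x Hx. apply sqrt_lt_R0. apply Mpos; auto. }
    apply HC. lia. apply Rabs_def2 in Hs. lra.
  - intros s Hs.
    rewrite (Derive_ext _ (fun r => (r - c) * sqrt (sqrt (M gx gy c r))) s (chord_eq gx gy gu Sx Sy Su Leg c)).
    destruct (Hfin s Hs) as [Hm Hdm].
    set (m := M gx gy c s) in *. set (dm := Derive (M gx gy c) s) in *.
    assert (hM : is_derive (M gx gy c) s dm).
    { apply Derive_correct. apply gs_exd. apply S_M; auto. }
    assert (Hm0 : 0 < m) by lra.
    pose proof (is_derive_sqrt _ _ _ hM Hm0) as h1.
    assert (Hsm : 0 < sqrt m) by (apply sqrt_lt_R0; exact Hm0).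
    pose proof (is_derive_sqrt _ _ _ h1 Hsm) as h2.
    assert (hl : is_derive (fun r : R => r - c) s 1).
    { auto_derive. exact I. ring. }
    pose proof (is_derive_mult _ _ _ _ _ hl h2 Rmult_comm) as h3.
    assert (HD : Derive (fun r => (r - c) * sqrt (sqrt (M gx gy c r))) s =
       1 * sqrt (sqrt m) + (s - c) * (dm / (2 * sqrt m) / (2 * sqrt (sqrt m))))
      by (apply is_derive_unique; exact h3).
    rewrite HD.
    set (q := sqrt (sqrt m)).
    assert (Hq : 0 < q) by (apply sqrt_lt_R0; exact Hsm).
    assert (Hq2 : sqrt m = q * q) by (unfold q; rewrite sqrt_sqrt; lra).
    assert (Hm4 : m = q * q * (q * q)) by (rewrite <- Hq2; rewrite sqrt_sqrt; lra).
    rewrite Hq2.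
    replace (1 * q + (s - c) * (dm / (2 * (q * q)) / (2 * q))) with
        ((4 * (q * q * (q * q)) + (s - c) * dm) / (4 * (q * q * q))) by (field; lra).
    apply Rdiv_lt_0_compat.
    + rewrite <- Hm4. apply Rabs_le_between in Hdm. lra.
    + assert (0 < q * q) by nra. nra.
Qed.
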